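(* Let $P$ be an $r$-differential poset and let $j_{m-1}\lessdot j_m$ be a covering pair in $P$, with $j_m$ of rank $m$, such that each of $j_{m-1}$ and $j_m$ covers at most one element of $P$. Then for every integer $n\ge m$ there is a saturated chain $j_{m-1}\lessdot j_m\lessdot j_{m+1}\lessdot\cdots\lessdot j_{n-1}\lessdot j_n$ in $P$ in which every $j_\ell$ covers at most one element of $P$.
   Context: An $r$-differential poset ($r$ a positive integer) is a graded poset with a minimum element, finite intervals and finite rank sets, such that (D1) an element covering exactly $m$ elements is covered by exactly $m+r$ elements, and (D2) two distinct elements that both cover exactly $m$ common elements are both covered by exactly $m$ common elements. $x\lessdot y$ means $y$ covers $x$. *)

(* Defs.v *)
From Stdlib Require Import List Arith.
Import ListNotations.

Section Differential.
Context {P : Type} (le : P -> P -> Prop).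

Definition lt (x y : P) : Prop := le x y /\ x <> y.

(* x ⋖ y : y covers x *)
Definition covers (x y : P) : Prop :=
  lt x y /\ forall z, le x z -> le z y -> z = x \/ z = y.

Definition is_partial_order : Prop :=
  (forall x, le x x) /\
  (forall x y, le x y -> le y x -> x = y) /\
  (forall x y z, le x y -> le y z -> le x z).

Definition has_card (A : P -> Prop) (m : nat) : Prop :=
  exists s : list P, NoDup s /\ (forall x, In x s <-> A x) /\ length s = m.

Definition covers_at_most_one (y : P) : Prop :=
  forall a b, covers a y -> covers b y -> a = b.

Definition differential_poset (r : nat) (rk : P -> nat) : Prop :=
  0 < r /\
  is_partial_order /\
  (exists z0, (forall x, le z0 x) /\ rk z0 = 0) /\
  (forall x y, covers x y -> rk y = S (rk x)) /\
  (forall x y, exists s : list P, forall z, le x z -> le z y -> In z s) /\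
  (forall n, exists s : list P, forall z, rk z = n -> In z s) /\
  (forall x m, has_card (fun z => covers z x) m ->
               has_card (fun z => covers x z) (m + r)) /\
  (forall x y m, x <> y ->
     has_card (fun z => covers z x /\ covers z y) m ->
     has_card (fun z => covers x z /\ covers y z) m).
End Differential.

(* Main.v *)
Require Import Defs.
From Stdlib Require Import List Arith Lia Classical.
Import ListNotations.

Lemma pig (A:Type) (R: A->A->Prop) (L: list A): NoDup L -> forall M,
  (forall z, In z L -> exists w, In w M /\ R z w) ->
  (forall z z' w, In z L -> In z' L -> R z w -> R z' w -> z = z') ->
  length L <= length M.
Proof.
  induction L as [|a L IH]; intros Hnd M Hex Hinj; simpl; [lia|].
  inversion Hnd; subst.
  destruct (Hex a (or_introl eq_refl)) as [w [Hw Ra]].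
  destruct (in_split _ _ Hw) as [M1 [M2 ->]].
  rewrite length_app; simpl.
  assert (length L <= length (M1 ++ M2)).
  { apply IH; auto.
    - intros z Hz. destruct (Hex z (or_intror Hz)) as [w' [Hw' Rz]].
      exists w'; split; auto.
      apply in_app_or in Hw'; destruct Hw' as [H|[H|H]]; try (apply in_or_app; auto; fail).
      subst w'. assert (z = a) by (apply (Hinj z a w); simpl; auto). subst; contradiction.
    - intros; eapply Hinj; simpl; eauto. }
  rewrite length_app in H; lia.
Qed.

Section S.
Variables (P : Type) (le : P -> P -> Prop) (r : nat) (rk : P -> nat).
Hypothesis HP : differential_poset le r rk.

Lemma common (x y w z : P) : covers le x y -> covers_at_most_one le y -> y <> w ->
  covers le y z -> covers le w z ->
  covers le x w /\ forall z', covers le y z' -> covers le w z' -> z' = z.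
Proof.
  destruct HP as [Hr [Hpo [Hmin [Hgr [Hint [Hrank [HD1 HD2]]]]]]].
  intros Hxy Hy Hyw Hyz Hwz.
  destruct (classic (covers le x w)) as [Hxw|Hxw].
  - split; auto.
    assert (Hc : has_card (fun u => covers le y u /\ covers le w u) 1).
    { apply HD2; auto. exists [x]; split; [repeat constructor; simpl; tauto|split; auto].
      intro u; simpl; split.
      + intros [<-|[]]; auto.
      + intros [H1 H2]; left; symmetry; apply (Hy u x); auto. }
    destruct Hc as [s [_ [Hs Hl]]].
    destruct s as [|u [|]]; simpl in Hl; try lia.
    intros z' H1 H2.
    assert (A1 : In z' [u]) by (apply Hs; auto).
    assert (A2 : In z [u]) by (apply Hs; auto).
    simpl in A1, A2. destruct A1 as [<-|[]]; destruct A2 as [<-|[]]; auto.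
  - exfalso.
    assert (Hc : has_card (fun u => covers le y u /\ covers le w u) 0).
    { apply HD2; auto. exists []; split; [constructor|split; auto].
      intro u; simpl; split; [tauto|].
      intros [H1 H2]. assert (u = x) by (apply (Hy u x); auto). subst; auto. }
    destruct Hc as [s [_ [Hs Hl]]]. destruct s; simpl in Hl; try lia.
    apply (proj2 (Hs z)); auto.
Qed.

Lemma step (x y : P) : covers le x y -> covers_at_most_one le x -> covers_at_most_one le y ->
  exists z, covers le y z /\ covers_at_most_one le z.
Proof.
  intros Hxy Hx Hy.
  destruct (classic (exists z, covers le y z /\ covers_at_most_one le z)) as [H|H]; auto.
  exfalso.
  pose proof HP as HP'.
  destruct HP' as [Hr [Hpo [Hmin [Hgr [Hint [Hrank [HD1 HD2]]]]]]].
  assert (Hly : has_card (fun u => covers le u y) 1).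
  { exists [x]; split; [repeat constructor; simpl; tauto|split; auto].
    intro u; simpl; split; [intros [<-|[]]; auto|].
    intro Hu; left; symmetry; apply (Hy u x); auto. }
  destruct (HD1 _ _ Hly) as [Ly [HndL [HL HlenL]]].
  assert (Hux : exists Mx, (forall u, In u Mx <-> covers le x u) /\ length Mx <= S r).
  { destruct (classic (exists w, covers le w x)) as [[w Hw]|Hn].
    - assert (Hc : has_card (fun u => covers le u x) 1).
      { exists [w]; split; [repeat constructor; simpl; tauto|split; auto].
        intro u; simpl; split; [intros [<-|[]]; auto|].
        intro Hu; left; symmetry; apply (Hx u w); auto. }
      destruct (HD1 _ _ Hc) as [Mx [_ [HM Hl]]]. exists Mx; split; auto; lia.
    - assert (Hc : has_card (fun u => covers le u x) 0).
      { exists []; split; [constructor|split; auto].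
        intro u; simpl; split; [tauto|intro Hu; apply Hn; eauto]. }
      destruct (HD1 _ _ Hc) as [Mx [_ [HM Hl]]]. exists Mx; split; auto; lia. }
  destruct Hux as [Mx [HM HlM]].
  assert (Hy_in : In y Mx) by (apply HM; auto).
  destruct (in_split _ _ Hy_in) as [M1 [M2 HMe]].
  assert (Hlen : length Ly <= length (M1 ++ M2)).
  { apply (pig _ (fun z w => covers le y z /\ covers le w z /\ w <> y /\ covers le x w)); auto.
    - intros z Hz. apply HL in Hz.
      assert (Hnz : ~ covers_at_most_one le z) by (intro; apply H; eauto).
      unfold covers_at_most_one in Hnz.
      assert (exists w, covers le w z /\ w <> y).
      { apply NNPP; intro Hne. apply Hnz; intros a b Ha Hb.
        assert (a = y) by (apply NNPP; intro; apply Hne; eauto).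
        assert (b = y) by (apply NNPP; intro; apply Hne; eauto). congruence. }
      destruct H0 as [w [Hwz Hwy]].
      destruct (common x y w z Hxy Hy (fun e => Hwy (eq_sym e)) Hz Hwz) as [Hxw _].
      exists w; split; [|tauto].
      assert (In w Mx) by (apply HM; auto). rewrite HMe in H0.
      apply in_app_or in H0; destruct H0 as [H0|[H0|H0]]; try (apply in_or_app; auto; fail).
      congruence.
    - intros z z' w _ _ [Hyz [Hwz [Hwy Hxw]]] [Hyz' [Hwz' _]].
      destruct (common x y w z Hxy Hy (fun e => Hwy (eq_sym e)) Hyz Hwz) as [_ Hu].
      symmetry; apply Hu; auto. }
  rewrite HMe, length_app in HlM; simpl in HlM. rewrite length_app in Hlen. lia.
Qed.
End S.

Theorem proposition6p11 (P : Type) (le : P -> P -> Prop) (r : nat) (rk : P -> nat)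
  (HP : differential_poset le r rk)
  (m : nat) (jm1 jm : P)
  (Hcov : covers le jm1 jm) (Hrk : rk jm = m)
  (H1 : covers_at_most_one le jm1) (H2 : covers_at_most_one le jm) :
  forall n : nat, m <= n ->
  exists j : nat -> P,
    j (m - 1) = jm1 /\ j m = jm /\
    (forall l, m - 1 <= l -> l < n -> covers le (j l) (j (S l))) /\
    (forall l, m - 1 <= l -> l <= n -> covers_at_most_one le (j l)).
Proof.
  assert (Hm : 1 <= m).
  { pose proof HP as [_ [_ [_ [Hgr _]]]]. rewrite (Hgr _ _ Hcov) in Hrk. lia. }
  assert (K : forall k, exists j : nat -> P,
    j (m - 1) = jm1 /\ j m = jm /\
    (forall l, m - 1 <= l -> l < m + k -> covers le (j l) (j (S l))) /\
    (forall l, m - 1 <= l -> l <= m + k -> covers_at_most_one le (j l))).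
  { induction k as [|k [j [Ha [Hb [Hc Hd]]]]].
    - exists (fun l => if Nat.eqb l m then jm else jm1).
      rewrite Nat.eqb_refl. replace (Nat.eqb (m-1) m) with false by (symmetry; apply Nat.eqb_neq; lia).
      split; [auto|split; [auto|split]].
      + intros l H3 H4. assert (l = m - 1) by lia. subst l.
        replace (Nat.eqb (m-1) m) with false by (symmetry; apply Nat.eqb_neq; lia).
        replace (S (m-1)) with m by lia. rewrite Nat.eqb_refl; auto.
      + intros l H3 H4. destruct (Nat.eqb l m); auto.
    - destruct (step P le r rk HP (j (m + k - 1)) (j (m + k))) as [z [Hz1 Hz2]].
      + replace (m + k) with (S (m + k - 1)) at 2 by lia. apply Hc; lia.
      + apply Hd; lia.
      + apply Hd; lia.
      + exists (fun l => if Nat.eqb l (m + S k) then z else j l).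
        replace (Nat.eqb (m-1) (m + S k)) with false by (symmetry; apply Nat.eqb_neq; lia).
        replace (Nat.eqb m (m + S k)) with false by (symmetry; apply Nat.eqb_neq; lia).
        split; [auto|split; [auto|split]].
        * intros l H3 H4.
          destruct (Nat.eqb_spec l (m + S k)); [lia|].
          destruct (Nat.eqb_spec (S l) (m + S k)).
          -- replace l with (m + k) by lia; auto.
          -- apply Hc; lia.
        * intros l H3 H4.
          destruct (Nat.eqb_spec l (m + S k)); auto. apply Hd; lia. }
  intros n Hn. destruct (K (n - m)) as [j Hj]. replace (m + (n - m)) with n in Hj by lia.
  exists j; exact Hj.
Qed.
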